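(* Let $b>1$ be an integer and let $\mathcal{A}$ be a minimal complete deterministic automaton over $A_b=\{0,\ldots,b-1\}$. Let $\ell+1$ be the number of states of $\mathcal{A}$ that belong to $0$-circuits. Then $\mathcal{A}$ accepts by value an impurely periodic set of integers if and only if the following three conditions hold: (a) there exists a pseudo-morphism $\phi:\mathcal{A}\to\mathcal{A}_{?,\ell}$ (this condition is understood to fail if $\ell=0$, since $\mathcal{A}_{?,0}$ is not defined); (b) for all states $s,s'$ of $\mathcal{A}$ distinct from the initial state, if $\phi(s)=\phi(s')$ then $s$ and $s'$ are ultimately-equivalent; (c) the initial state bears a self-loop labelled by the digit $0$ and has no other incoming transitions.
   Context: For $u=u_\ell\cdots u_0\in A_b^*$, $\mathrm{val}(u)=\sum_i u_i b^i$. An automaton accepts by value a set $X\subseteq\mathbb{N}$ if for every word $u$, $u$ is accepted iff $\mathrm{val}(u)\in X$. A set $P\subseteq\mathbb{N}$ is purely periodic if $P=R+p\mathbb{N}$ for some $p\ge1$ and $R\subseteq\{0,\ldots,p-1\}$; a set is eventually periodic if there exist $p\ge1$, $N\ge0$ with $x\in X\iff x+p\in X$ for all $x\ge N$; it is impurely periodic if it is eventually periodic but not purely periodic. $s\cdot u$ denotes the state reached from $s$ by reading $u$. A $0$-circuit is a circuit all of whose transitions are labelled $0$. For $q\ge1$, $\mathcal{A}_{?,q}$ is the complete deterministic automaton over $A_b$ with states $\{0,\ldots,q-1\}$, initial state $0$, transitions $n\xrightarrow{a}(nb+a)\bmod q$, and no specified final states. A pseudo-morphism $\mathcal{A}\to\mathcal{M}$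 between complete deterministic automata is a map $\phi$ on states sending initial state to initial state with $\phi(s\cdot a)=\phi(s)\cdot a$ for all states $s$ and letters $a$. Two states $s,s'$ are ultimately-equivalent if there is $m\ge1$ with $s\cdot u=s'\cdot u$ for all words $u$ with $|u|\ge m$. *)

(* Defs.v *)
From mathcomp Require Import all_boot.
Set Implicit Arguments. Unset Strict Implicit. Unset Printing Implicit Defensive.

Section Automata.
Variables (b : nat) (Q : finType) (delta : Q -> 'I_b -> Q).

Definition run (s : Q) (u : seq 'I_b) : Q := foldl delta s u.

(* val(u_l ... u_0) = sum u_i b^i, most significant digit read first *)
Definition val (u : seq 'I_b) : nat := foldl (fun n (a : 'I_b) => n * b + a) 0 u.

Definition accepted (q0 : Q) (F : pred Q) (u : seq 'I_b) : Prop := F (run q0 u).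

Definition accepts_by_value (q0 : Q) (F : pred Q) (X : nat -> Prop) : Prop :=
  forall u : seq 'I_b, accepted q0 F u <-> X (val u).

Definition minimal_dfa (q0 : Q) (F : pred Q) : Prop :=
  (forall s : Q, exists u : seq 'I_b, run q0 u = s) /\
  (forall s s' : Q, s <> s' -> exists u : seq 'I_b, F (run s u) <> F (run s' u)).

Definition on_zero_circuit (z : 'I_b) (s : Q) : Prop :=
  exists k : nat, 0 < k /\ iter k (fun t => delta t z) s = s.

(* pseudo-morphism A -> A_{?,q}, states of A_{?,q} being 'I_q *)
Definition pseudo_morphism (q0 : Q) (q : nat) (phi : Q -> 'I_q) : Prop :=
  nat_of_ord (phi q0) = 0 /\
  forall (s : Q) (a : 'I_b), nat_of_ord (phi (delta s a)) = (phi s * b + a) %% q.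

Definition ultimately_equivalent (s s' : Q) : Prop :=
  exists m : nat, 0 < m /\ forall u : seq 'I_b, m <= size u -> run s u = run s' u.

End Automata.

Definition purely_periodic (X : nat -> Prop) : Prop :=
  exists (p : nat) (R : nat -> Prop), 1 <= p /\ (forall r, R r -> r < p) /\
    forall x, X x <-> exists r k, R r /\ x = r + p * k.

Definition eventually_periodic (X : nat -> Prop) : Prop :=
  exists p N : nat, 1 <= p /\ forall x, N <= x -> (X x <-> X (x + p)).

Definition impurely_periodic (X : nat -> Prop) : Prop :=
  eventually_periodic X /\ ~ purely_periodic X.

(* Main.v *)
Require Import Defs.
From mathcomp Require Import all_boot.
From mathcomp Require Import zify.
From mathcomp Require Import ssralg ring.
From mathcomp Require Import cyclic.
From Stdlib Require Import Classical.
Set Implicit Arguments. Unset Strict Implicit. Unset Printing Implicit Defensive.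

Section Basic.
Variables (b : nat).
Local Notation vl := (@Defs.val b).

Lemma vl_rcons u (a : 'I_b) : vl (rcons u a) = vl u * b + a.
Proof. by rewrite /Defs.val foldl_rcons. Qed.

Lemma vl_cat u w : vl (u ++ w) = vl u * b ^ size w + vl w.
Proof.
elim/last_ind: w => [|w a IH]; first by rewrite cats0 /= expn0 muln1 addn0.
rewrite -rcons_cat !vl_rcons IH size_rcons expnS; lia.
Qed.

Variable (hb : 1 < b).

Lemma vl_rep j n : n < b ^ j -> exists w : seq 'I_b, size w = j /\ vl w = n.
Proof.
elim: j n => [|j IH] n hn.
  by exists [::]; move: hn; rewrite expn0; case: n.
have b0 : 0 < b by lia.
have hd : n %/ b < b ^ j by rewrite ltn_divLR // -expnSr.
have [w [sw vw]] := IH (n %/ b) hd.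
exists (rcons w (Ordinal (ltn_pmod n b0))); rewrite size_rcons sw vl_rcons vw /=.
by split => //; rewrite -divn_eq.
Qed.

Lemma vl_any n : exists w : seq 'I_b, vl w = n.
Proof. by have [w [_ vw]] := vl_rep (ltn_expl n hb); exists w. Qed.

Lemma pow_big j : j < b ^ j.
Proof. exact: ltn_expl. Qed.

End Basic.
Section Auto.
Variables (b : nat) (hb : 1 < b) (Q : finType) (q0 : Q) (delta : Q -> 'I_b -> Q) (F : pred Q).
Local Notation vl := (@Defs.val b).
Local Notation run := (Defs.run delta).
Local Notation z := (Ordinal (ltnW hb)).

Lemma run_cat s u w : run s (u ++ w) = run (run s u) w.
Proof. by rewrite /Defs.run foldl_cat. Qed.

Lemma run_rcons s u a : run s (rcons u a) = delta (run s u) a.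
Proof. by rewrite /Defs.run foldl_rcons. Qed.

Lemma run_nseq s K : run s (nseq K z) = iter K (fun t => delta t z) s.
Proof. by elim: K s => [|K IH] s //; rewrite iterSr -IH. Qed.

Lemma min_eq : minimal_dfa delta q0 F -> forall s s',
  (forall w, F (run s w) <-> F (run s' w)) -> s = s'.
Proof.
move=> [_ hm] s s' H; case: (s =P s') => // /hm [w hw]; exfalso; apply: hw.
by apply/idP/idP => /H.
Qed.

Lemma ord_z (a : 'I_b) : nat_of_ord a = 0 -> a = z.
Proof. by move=> h; apply: val_inj. Qed.

Hypothesis hq0 : delta q0 z = q0.

Lemma run_vl0 u : vl u = 0 -> run q0 u = q0.
Proof.
elim/last_ind: u => [|u a IH] //; rewrite vl_rcons run_rcons => h.
rewrite IH; last by lia.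
by rewrite (@ord_z a) //; lia.
Qed.

Lemma run_eq_vl u v : vl u = vl v -> run q0 u = run q0 v.
Proof.
elim/last_ind: u v => [|u a IH] v.
  by move=> h; rewrite (run_vl0 (esym h)).
case/lastP: v => [|v a'].
  by move=> h; rewrite (run_vl0 h).
rewrite !vl_rcons !run_rcons => h.
have ha : nat_of_ord a = a'.
  have := congr1 (fun x => x %% b) h; rewrite /= !modnMDl !modn_small //.
have hv : vl u = vl v.
  have := congr1 (fun x => x %/ b) h; rewrite /= !divnMDl ?divn_small ?addn0 //; lia.
by rewrite (IH _ hv) (val_inj ha).
Qed.

Hypothesis hin : forall s a, delta s a = q0 -> s = q0 /\ a = z.

Lemma run_q0_vl u : run q0 u = q0 -> vl u = 0.
Proof.
elim/last_ind: u => [|u a IH] //; rewrite vl_rcons run_rcons => /hin [/IH -> ->] //.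
Qed.

Lemma run_stay s w : s <> q0 -> run s w <> q0.
Proof.
elim/last_ind: w => [|w a IH] // hs; rewrite run_rcons => /hin [] h _; exact: IH.
Qed.

End Auto.

Section Per.
Variable X : nat -> Prop.

Unset Implicit Arguments.
Definition perN (p N : nat) := forall x, N <= x -> (X x <-> X (x + p)).
Set Implicit Arguments.

Lemma perN_mul p N t : perN p N -> perN (p * t) N.
Proof.
move=> h; elim: t => [|t IH] x hx; first by rewrite muln0 addn0.
have -> : x + p * t.+1 = (x + p * t) + p by rewrite mulnS; lia.
rewrite (IH x hx) h //; lia.
Qed.

Lemma perN_mon p N N' : N <= N' -> perN p N -> perN p N'.
Proof. by move=> hN h x hx; apply: h; lia. Qed.

Lemma perN_gcd p q N : 0 < p -> perN p N -> perN q N -> perN (gcdn p q) N.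
Proof.
move=> p0 hp hq x hx.
have [a _ /dvdnP [c hc]] := Bezoutl q p0.
rewrite (@perN_mul _ _ a hq (x + gcdn p q)); last exact: leq_trans hx (leq_addr _ _).
have -> : x + gcdn p q + q * a = x + p * c.
  move: hc; set g := gcdn p q; nia.
rewrite -(perN_mul c hp) //; lia.
Qed.

Lemma pp_shift : purely_periodic X -> exists p, 0 < p /\ perN p 0.
Proof.
move=> [p [R [p1 [hR hX]]]]; exists p; split => // x _; rewrite !hX.
split => [[r [k [hr ->]]]|[r [k [hr e]]]].
  by exists r, k.+1; split => //; rewrite mulnS; lia.
have hk : 0 < k by have := hR _ hr; case: k e => [|k]; lia.
by exists r, k.-1; split => //; move: e; case: k hk => [|k] //; rewrite mulnS; lia.
Qed.

Lemma shift_pp p : 0 < p -> perN p 0 -> purely_periodic X.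
Proof.
move=> p0 h; exists p, (fun r => r < p /\ X r); split => //; split => [r []//|x].
split => [hx|[r [k [[hr hXr] ->]]]].
  exists (x %% p), (x %/ p); rewrite {2}(divn_eq x p) ltn_pmod //; split; last by lia.
  split=> //; have := @perN_mul _ _ (x %/ p) h (x %% p) (leq0n _).
  by rewrite addnC mulnC -divn_eq => ->.
by apply/(@perN_mul _ _ k h r (leq0n _)).
Qed.

End Per.

Lemma bound_seq (T : eqType) (P : T -> nat -> Prop) :
  (forall t m m', m <= m' -> P t m -> P t m') ->
  (forall t, exists m, P t m) ->
  forall r : seq T, exists M, forall t, t \in r -> P t M.
Proof.
move=> hmon hex; elim => [|t r [M IH]]; first by exists 0.
have [m hm] := hex t; exists (maxn m M) => t'; rewrite inE => /orP [/eqP ->|/IH h].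
  by apply: hmon hm; exact: leq_maxl.
by apply: hmon h; exact: leq_maxr.
Qed.

Section Back.
Variables (b : nat) (hb : 1 < b) (Q : finType) (q0 : Q) (delta : Q -> 'I_b -> Q) (F : pred Q).
Variables (l : nat) (phi : Q -> 'I_l).
Local Notation vl := (@Defs.val b).
Local Notation run := (Defs.run delta).
Local Notation z := (Ordinal (ltnW hb)).
Hypothesis hmin : minimal_dfa delta q0 F.
Hypothesis hpm : pseudo_morphism delta q0 phi.
Hypothesis hue : forall s s' : Q, s <> q0 -> s' <> q0 -> phi s = phi s' ->
         ultimately_equivalent delta s s'.
Hypothesis hq0 : delta q0 z = q0.
Hypothesis hin : forall s a, delta s a = q0 -> s = q0 /\ a = z.

Lemma phi_run u : nat_of_ord (phi (run q0 u)) = vl u %% l.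
Proof.
elim/last_ind: u => [|u a IH]; first by rewrite /= hpm.1 mod0n.
by rewrite run_rcons vl_rcons hpm.2 IH -modnDml modnMml modnDml.
Qed.

Lemma unif : exists M, forall s s', s <> q0 -> s' <> q0 -> phi s = phi s' ->
  forall w, M <= size w -> run s w = run s' w.
Proof.
pose P (t : Q * Q) M := t.1 <> q0 -> t.2 <> q0 -> phi t.1 = phi t.2 ->
  forall w, M <= size w -> run t.1 w = run t.2 w.
have := @bound_seq _ P _ _ (enum [set: (Q * Q)%type]).
case=> [t m m' hm hP h1 h2 h3 w hw|t|M hM].
- by apply: hP => //; exact: leq_trans hm hw.
- rewrite /P; case: (t.1 =P q0) => [e|n1]; first by exists 0.
  case: (t.2 =P q0) => [e|n2]; first by exists 0.
  case: (phi t.1 =P phi t.2) => [e|n3]; last by exists 0.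
  by have [m [_ hm]] := hue n1 n2 e; exists m.
by exists M => s s'; apply: (hM (s, s')); rewrite mem_enum in_setT.
Qed.

Definition Xb (n : nat) : Prop := exists u, vl u = n /\ F (run q0 u).

Lemma accXb u : Xb (vl u) <-> F (run q0 u).
Proof.
split => [[v [e hF]]|h]; last by exists u.
by rewrite (run_eq_vl hq0 (u := u) (v := v)).
Qed.

Lemma back : exists X, accepts_by_value delta q0 F X /\ impurely_periodic X.
Proof.
have l0 : 0 < l by case: (phi q0) => i; case: l i.
exists Xb; split; first by move=> u; rewrite accXb.
split.
  have [M hM] := unif.
  exists (l * b ^ M), (b ^ M); split; first by rewrite muln_gt0 l0 expn_gt0; lia.
  move=> x hx.
  have hr : x %% b ^ M < b ^ M by rewrite ltn_pmod // expn_gt0; lia.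
  have [w [sw vw]] := vl_rep hb hr.
  have [u1 vu1] := vl_any hb (x %/ b ^ M).
  have [v1 vv1] := vl_any hb (x %/ b ^ M + l).
  have n1 : 0 < x %/ b ^ M by rewrite divn_gt0 // expn_gt0; lia.
  have e1 : x = vl (u1 ++ w) by rewrite vl_cat sw vu1 vw -divn_eq.
  have e2 : x + l * b ^ M = vl (v1 ++ w).
    by rewrite vl_cat sw vv1 vw mulnDl {1}(divn_eq x (b ^ M)); lia.
  rewrite e2 e1 !accXb !run_cat (hM (run q0 u1) (run q0 v1)) ?sw //.
  - by move/(run_q0_vl hin); lia.
  - by move/(run_q0_vl hin); lia.
  - by apply: val_inj; rewrite /= !phi_run vu1 vv1 -modnDmr modnn addn0.
case/pp_shift => p [p0 hp].
have [u vu] := vl_any hb p.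
have hs : run q0 u <> q0 by move/(run_q0_vl hin); lia.
apply: hs; apply: (min_eq hmin) => w.
rewrite -run_cat -!accXb vl_cat vu addnC mulnC.
by rewrite mulnC -(@perN_mul _ _ _ _ hp (vl w) (leq0n _)).
Qed.

End Back.

Lemma ex_min (P : nat -> Prop) : (exists n, P n) -> exists m, P m /\ forall n, P n -> m <= n.
Proof.
move=> [n hn]; elim: n {-2}n (leqnn n) hn => [|N IH] n hnN hn.
  by exists n; split => // n'; move: hnN; rewrite leqn0 => /eqP ->.
case: (classic (exists m, m < n /\ P m)) => [[m [hm hPm]]|hno].
  by apply: (IH m) => //; lia.
exists n; split => // n' hn'; case: (leqP n n') => // hlt; exfalso; apply: hno.
by exists n'.
Qed.

Section Fwd.
Variables (b : nat) (hb : 1 < b) (Q : finType) (q0 : Q) (delta : Q -> 'I_b -> Q) (F : pred Q).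
Variable X : nat -> Prop.
Local Notation vl := (@Defs.val b).
Local Notation run := (Defs.run delta).
Local Notation z := (Ordinal (ltnW hb)).
Hypothesis hmin : minimal_dfa delta q0 F.
Hypothesis hacc : accepts_by_value delta q0 F X.
Hypothesis hnpp : ~ purely_periodic X.
Variables (p0 N0 : nat).
Hypothesis hp0 : 0 < p0.
Hypothesis hper : perN X p0 N0.

Lemma b0 : 0 < b. Proof. lia. Qed.
Lemma bJ J : 0 < b ^ J. Proof. by rewrite expn_gt0 b0. Qed.

Lemma accX u : F (run q0 u) <-> X (vl u).
Proof. exact: hacc. Qed.

Lemma resid u w : F (run (run q0 u) w) <-> X (vl u * b ^ size w + vl w).
Proof. by rewrite -run_cat -vl_cat; exact: hacc. Qed.

Lemma same_state u u' : run q0 u = run q0 u' -> forall v J, v < b ^ J ->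
  (X (vl u * b ^ J + v) <-> X (vl u' * b ^ J + v)).
Proof.
move=> e v J hv; have [w [sw vw]] := vl_rep hb hv.
by rewrite -sw -vw -!resid e.
Qed.

Lemma hq0 : delta q0 z = q0.
Proof.
apply: (min_eq hmin) => w.
have -> : run (delta q0 z) w = run q0 ([:: z] ++ w) by [].
by rewrite !accX vl_cat /= mul0n add0n.
Qed.

Lemma hin s a : delta s a = q0 -> s = q0 /\ a = z.
Proof.
move=> e; have [u hu] := hmin.1 s; subst s.
have e' : run q0 (rcons u a) = run q0 [::] by rewrite run_rcons.
case: (posnP (vl (rcons u a))) => [h0|hpos].
  move: h0; rewrite vl_rcons => h0.
  split; first by apply: (run_vl0 hq0); lia.
  by apply: ord_z; lia.
exfalso; apply: hnpp; apply: (@shift_pp _ p0) => // x _.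
set J := x + p0 + N0.
have hJ := pow_big hb J.
have := same_state e' (v := x) (J := J); rewrite /= mul0n add0n => <-; last by lia.
have := same_state e' (v := x + p0) (J := J); rewrite /= mul0n add0n => <-; last by lia.
rewrite addnA; apply: hper.
apply: leq_trans (leq_addr _ _); apply: leq_trans (leq_pmull _ hpos); lia.
Qed.

Definition good c := 0 < c /\ exists J N, perN X (c * b ^ J) N.

Lemma good_p0 : good p0.
Proof. by split => //; exists 0, N0; rewrite expn0 muln1. Qed.

Lemma key_good u u' : run q0 u = run q0 u' -> 0 < vl u -> vl u < vl u' ->
  good (vl u' - vl u).
Proof.
move=> e n1 nn; split; first by lia.
set n := vl u; set n' := vl u'.
set J := p0 + N0; have hJ := pow_big hb J; set B := b ^ J.
exists J, (n * B) => x hx.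
set v := (x - n * B) %% p0; set t := (x - n * B) %/ p0.
have hv : v < p0 by rewrite ltn_pmod.
have hx' : x = n * B + v + p0 * t.
  have := divn_eq (x - n * B) p0; rewrite -/v -/t (mulnC t); move: hx.
  move: (n * B) (p0 * t) => a c; lia.
have hnB : B <= n * B by exact: leq_pmull.
have hnB' : n * B <= n' * B by rewrite leq_mul2r; apply/orP; right; lia.
have -> : x + (n' - n) * B = n' * B + v + p0 * t by rewrite mulnBl; lia.
have hN0 : N0 <= n * B + v by lia.
have hN0' : N0 <= n' * B + v by lia.
rewrite hx' -(@perN_mul _ _ _ _ hper _ hN0) -(@perN_mul _ _ _ _ hper _ hN0').
apply: same_state => //; lia.
Qed.

Lemma good_gcd c c' : good c -> good c' -> good (gcdn c c').
Proof.
move=> [c0 [J1 [N1 h1]]] [c'0 [J2 [N2 h2]]]; split; first by rewrite gcdn_gt0 c0.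
exists (J1 + J2), (maxn N1 N2).
have -> : gcdn c c' * b ^ (J1 + J2) = gcdn (c * b ^ J1 * b ^ J2) (c' * b ^ J2 * b ^ J1).
  by rewrite muln_gcdl expnD -!mulnA (mulnC (b ^ J2)).
apply: perN_gcd.
- by rewrite !muln_gt0 c0 !bJ.
- by apply: perN_mon (leq_maxl _ _) _; apply: perN_mul.
- by apply: perN_mon (leq_maxr _ _) _; apply: perN_mul.
Qed.

Section K.
Variables (k : nat) (hk : good k) (hkmin : forall c, good c -> k <= c).

Lemma k0 : 0 < k. Proof. by case: hk. Qed.

Lemma k_dvd c : good c -> k %| c.
Proof.
move=> hc; have hg := hkmin (good_gcd hk hc).
have hle : gcdn k c <= k by apply: dvdn_leq k0 (dvdn_gcdl _ _).
have -> : k = gcdn k c by apply/eqP; rewrite eqn_leq hg hle.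
exact: dvdn_gcdr.
Qed.

Lemma k_cop : coprime k b.
Proof.
rewrite /coprime; set g := gcdn k b.
have g0 : 0 < g by rewrite gcdn_gt0 k0.
case: (ltnP 1 g) => [g1|]; last by lia.
exfalso.
have hgk : g %| k := dvdn_gcdl _ _.
have hgb : g %| b := dvdn_gcdr _ _.
have hk' : good (k %/ g).
  split; first by rewrite divn_gt0 // dvdn_leq // k0.
  case: hk => _ [J [N h]]; exists J.+1, N.
  have -> : k %/ g * b ^ J.+1 = k * b ^ J * (b %/ g).
    rewrite expnS mulnA divn_mulAC // -muln_divA //; ring.
  exact: perN_mul.
have := hkmin hk'; rewrite leqNgt ltn_Pdiv // k0 //.
Qed.

Lemma mod_eq u u' : run q0 u = run q0 u' -> 0 < vl u -> 0 < vl u' ->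
  vl u %% k = vl u' %% k.
Proof.
move=> e h1 h2; case: (ltngtP (vl u) (vl u')) => [lt|lt|eq]; last by rewrite eq.
  apply/eqP; rewrite eq_sym eqn_mod_dvd; last exact: ltnW.
  exact: (k_dvd (key_good e h1 lt)).
apply/eqP; rewrite eqn_mod_dvd; last exact: ltnW.
exact: (k_dvd (key_good (esym e) h2 lt)).
Qed.

Lemma conv u u' : 0 < vl u -> vl u <= vl u' -> vl u %% k = vl u' %% k ->
  exists m, forall w, m <= size w -> run q0 (u ++ w) = run q0 (u' ++ w).
Proof.
move=> h1 hle hm.
have /dvdnP [t ht] : k %| vl u' - vl u by rewrite -eqn_mod_dvd // hm.
case: hk => _ [J [N hper']].
exists (J + N) => w hw; apply: (min_eq hmin) => y.
rewrite !resid !vl_cat.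
set j := size w; set i := size y.
have hjb := pow_big hb j.
have -> : vl u' = vl u + t * k by lia.
have -> : (vl u + t * k) * b ^ j + vl w = (vl u * b ^ j + vl w) + k * b ^ J * (t * b ^ (j - J)).
  have -> : b ^ j = b ^ J * b ^ (j - J) by rewrite -expnD subnKC //; lia.
  ring.
set A := vl u * b ^ j + vl w.
have -> : (A + k * b ^ J * (t * b ^ (j - J))) * b ^ i + vl y =
   (A * b ^ i + vl y) + k * b ^ J * (t * b ^ (j - J) * b ^ i) by ring.
apply: (@perN_mul _ _ _ _ hper').
have h3 : b ^ j <= A * b ^ i + vl y.
  apply: leq_trans (leq_addr _ _); apply: leq_trans (leq_pmulr _ (bJ i)).
  apply: leq_trans (leq_addr _ _); exact: leq_pmull.
move: h3 hjb hw; move: (b ^ j) (A * b ^ i + vl y) => c d; lia.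
Qed.

Lemma acc s : exists u, run q0 u == s.
Proof. by have [u hu] := hmin.1 s; exists u; apply/eqP. Qed.

Definition uof s := xchoose (acc s).
Lemma uofP s : run q0 (uof s) = s.
Proof. exact/eqP/(xchooseP (acc s)). Qed.

Definition phik (s : Q) : 'I_k := Ordinal (ltn_pmod (vl (uof s)) k0).

Lemma pos_ne u : 0 < vl u -> run q0 u <> q0.
Proof. by move=> h /(run_q0_vl hin); lia. Qed.

Lemma ne_pos u : run q0 u <> q0 -> 0 < vl u.
Proof. by case: (posnP (vl u)) => // /(run_vl0 hq0). Qed.

Lemma phik_run u : nat_of_ord (phik (run q0 u)) = vl u %% k.
Proof.
rewrite /=; have hu := uofP (run q0 u); set u' := uof _ in hu *.
case: (posnP (vl u)) => [h0|hp].
  have e : run q0 u' = q0 by rewrite hu; exact: (run_vl0 hq0 h0).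
  by rewrite h0 (run_q0_vl hin e).
apply: mod_eq => //; apply: ne_pos; rewrite hu; exact: pos_ne.
Qed.

Lemma pm : pseudo_morphism delta q0 phik.
Proof.
split; first by rewrite (phik_run [::]) mod0n.
move=> s a; rewrite -(uofP s) -run_rcons !phik_run vl_rcons.
by apply/esym; rewrite -modnDml modnMml modnDml.
Qed.

Lemma ue s s' : s <> q0 -> s' <> q0 -> phik s = phik s' ->
  ultimately_equivalent delta s s'.
Proof.
rewrite -(uofP s) -(uofP s'); move=> /ne_pos h1 /ne_pos h2 /(congr1 (@nat_of_ord _)).
rewrite !phik_run => e.
case: (leqP (vl (uof s)) (vl (uof s'))) => [le|lt].
  have [m hm] := conv h1 le e; exists m.+1; split => // w hw.
  by rewrite -!run_cat; apply: hm; lia.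
have [m hm] := conv h2 (ltnW lt) (esym e); exists m.+1; split => // w hw.
by rewrite -!run_cat; symmetry; apply: hm; lia.
Qed.

Lemma iter_mult (f : Q -> Q) c s t : iter c f s = s -> iter (c * t) f s = s.
Proof.
move=> h; elim: t => [|t IH]; first by rewrite muln0.
by rewrite mulnS iterD IH h.
Qed.

Variables (Z : {set Q}).
Hypothesis hZ : forall s : Q, s \in Z <-> on_zero_circuit delta z s.

Local Notation f := (fun t => delta t z).

Lemma cardZ : #|Z| = k.+1.
Proof.
have q0Z : q0 \in Z by apply/hZ; exists 1; split => //=; exact: hq0.
rewrite (cardsD1 q0) q0Z add1n; congr S.
have inj : {in Z :\ q0 &, injective phik}.
  move=> s s'; rewrite !inE => /andP [ns /hZ [c [c0 hc]]] /andP [ns' /hZ [c' [c0' hc']]] e.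
  have [m [_ hm]] := ue (elimN eqP ns) (elimN eqP ns') e.
  have e1 : s = iter (c * (c' * m.+1)) f s by rewrite iter_mult.
  have e2 : s' = iter (c' * (c * m.+1)) f s' by rewrite iter_mult.
  have eK : c * (c' * m.+1) = c' * (c * m.+1) by ring.
  rewrite e1 e2 -eK -!run_nseq; apply: hm; rewrite size_nseq.
  by rewrite mulnA; apply: leq_trans (leq_pmull _ _); rewrite ?muln_gt0 ?c0 ?c0'.
rewrite -(card_in_imset inj).
suff -> : phik @: (Z :\ q0) = [set: 'I_k] by rewrite cardsT card_ord.
apply/setP => r; rewrite in_setT; apply/imsetP.
have [u vu] := vl_any hb (r + k).
set s0 := run q0 u.
pose h (j : 'I_(#|Q|.+1)) := iter j f s0.
have : ~~ injectiveb h.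
  apply/negP => /injectiveP /leq_card; rewrite card_ord; lia.
move=> /injectivePn [i [j nij hij]].
have [i0 [c [c0 hc]]] : exists i0 c, 0 < c /\ iter c f (iter i0 f s0) = iter i0 f s0.
  case: (ltngtP i j) => [lt|lt|eq]; last by move: nij; rewrite -(inj_eq val_inj) /= eq => /eqP.
  - exists i, (j - i); split; first by lia.
    by rewrite -iterD subnK; [exact: esym hij | exact: ltnW].
  - exists j, (i - j); split; first by lia.
    by rewrite -iterD subnK; [exact: hij | exact: ltnW].
set e := totient k.
have e0 : 0 < e by rewrite totient_gt0 k0.
set E := e * i0.
have hE : i0 <= E by rewrite leq_pmull.
have circ : iter c f (iter E f s0) = iter E f s0.
  by rewrite -(subnK hE) iterD -iterD addnC iterD hc.
have hS : iter E f s0 = run q0 (u ++ nseq E z) by rewrite run_cat run_nseq.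
have vS : vl (u ++ nseq E z) = (r + k) * b ^ E.
  rewrite vl_cat vu size_nseq.
  suff -> : vl (nseq E z) = 0 by rewrite addn0.
  by elim: (E) => [|E' IH] //; rewrite -[nseq _ _]/([:: z] ++ nseq E' z) vl_cat IH /= addn0.
exists (iter E f s0).
  rewrite !inE; apply/andP; split; last by apply/hZ; exists c.
  apply/eqP; rewrite hS; apply: pos_ne; rewrite vS muln_gt0 bJ andbT; have := k0; lia.
apply: ord_inj; rewrite hS phik_run vS.
have Eul : b ^ e = 1 %[mod k] by apply: Euler_exp_totient; rewrite coprime_sym k_cop.
rewrite -modnMmr /E expnM -modnXm Eul modnXm exp1n modnMmr muln1 modnDr modn_small //.
Qed.

Variable (l : nat).
Hypothesis hl : #|Z| = l.+1.

Lemma fwd_main :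
  ((exists phi : Q -> 'I_l,
      pseudo_morphism delta q0 phi /\
      (forall s s' : Q, s <> q0 -> s' <> q0 -> phi s = phi s' ->
         ultimately_equivalent delta s s')) /\
   (delta q0 z = q0 /\
    forall (s : Q) (a : 'I_b), delta s a = q0 -> s = q0 /\ a = z)).
Proof.
have ekl : k = l by move: hl; rewrite cardZ => [[]].
subst l; split; last by split; [exact: hq0 | exact: hin].
by exists phik; split; [exact: pm | exact: ue].
Qed.

End K.

End Fwd.

Theorem theorem44 (b : nat) (hb : 1 < b) (Q : finType) (q0 : Q)
    (delta : Q -> 'I_b -> Q) (F : pred Q) (Z : {set Q}) (l : nat) :
  minimal_dfa delta q0 F ->
  (forall s : Q, s \in Z <-> on_zero_circuit delta (Ordinal (ltnW hb)) s) ->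
  #|Z| = l.+1 ->
  (exists X : nat -> Prop, accepts_by_value delta q0 F X /\ impurely_periodic X)
  <->
  ((exists phi : Q -> 'I_l,
      pseudo_morphism delta q0 phi /\
      (forall s s' : Q, s <> q0 -> s' <> q0 -> phi s = phi s' ->
         ultimately_equivalent delta s s')) /\
   (delta q0 (Ordinal (ltnW hb)) = q0 /\
    forall (s : Q) (a : 'I_b), delta s a = q0 -> s = q0 /\ a = Ordinal (ltnW hb))).
Proof.
move=> hmin hZ hl; split.
  move=> [X [hacc [[p0 [N0 [hp0 hper]]] hnpp]]].
  have hper' : perN X p0 N0 by exact: hper.
  have [k [hk hkmin]] := ex_min (ex_intro _ p0 (good_p0 b hp0 hper')).
  exact: (fwd_main hmin hacc hnpp hp0 hper' hk hkmin hZ hl).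
move=> [[phi [hpm hue]] [hq0 hin]].
exact: (back hmin hpm hue hq0 hin).
Qed.
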